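(* Let $I$ be a regular and $\mathcal{H}$-positively-homogeneous conditional indicator w.r.t. $\mathcal{H}$. Then for all $X\in\mathbb{D}_I$ and $h\in\mathbb{L}^0(\mathbb{R},\mathcal{H})$, $$I(hX)=h^+I(X)+h^-I(-X),$$ where $h^+=\max(h,0)$ and $h^-=\max(-h,0)$.
   Context: Let $(\Omega,\mathcal{F},\mathbb{P})$ be a probability space with $\mathcal{F}$ complete, and $\mathcal{H}\subseteq\mathcal{F}$ a complete sub-$\sigma$-algebra. $\overline{\mathbb{R}}=\mathbb{R}\cup\{\pm\infty\}$ with conventions $r\pm\infty=\pm\infty$, $\infty-\infty=0$, $\infty+\infty=\infty$, $0\times(\pm\infty)=0$; $\mathbb{L}^0(G,\mathcal{G})$ is the set of $\mathcal{G}$-measurable random variables a.s. valued in $G$. $\operatorname{ess\,sup}_{\mathcal{H}}(X)$ is the smallest $\mathcal{H}$-measurable random variable dominating $X$ a.s., $\operatorname{ess\,inf}_{\mathcal{H}}(X)=-\operatorname{ess\,sup}_{\mathcal{H}}(-X)$. A conditional indicator w.r.t. $\mathcal{H}$ is a map $I:\mathbb{D}_I\to\mathbb{L}^0(\overline{\mathbb{R}},\mathcal{H})$, $0\in\mathbb{D}_I\subseteq\mathbb{L}^0(\overline{\mathbb{R}},\mathcal{F})$, with $I(X)\in[\operatorname{ess\,inf}_{\mathcal{H}}(X),\operatorname{ess\,sup}_{\mathcal{H}}(X)]$ a.s. and $\mathbb{D}_I+\mathbb{L}^0(\overline{\mathbb{R}},\mathcal{H})\subseteq\mathbb{D}_I$.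 $\mathbb{D}_I$ is $\mathcal{H}$-decomposable if $X1_H+Y1_{\Omega\setminus H}\in\mathbb{D}_I$ for all $X,Y\in\mathbb{D}_I$, $H\in\mathcal{H}$. $I$ is regular if $\mathbb{D}_I$ is $\mathcal{H}$-decomposable and for $X,Y\in\mathbb{D}_I$, $H\in\mathcal{H}$, $X1_H=Y1_H$ implies $I(X)1_H=I(Y)1_H$. $I$ is $\mathcal{H}$-positively-homogeneous if for every $\alpha\in\mathbb{L}^0(\mathbb{R}_+,\mathcal{H})$, $\alpha\mathbb{D}_I\subseteq\mathbb{D}_I$ and $I(\alpha X)=\alpha I(X)$ for $X\in\mathbb{D}_I$. *)

(* Defs.v *)
From HB Require Import structures.
From mathcomp Require Import all_boot all_order all_algebra.
From mathcomp Require Import all_classical all_reals all_analysis measurable_realfun.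
Set Implicit Arguments. Unset Strict Implicit. Unset Printing Implicit Defensive.
Import Order.TTheory GRing.Theory Num.Theory.
Local Open Scope classical_set_scope.
Local Open Scope ring_scope.
Local Open Scope ereal_scope.

Section Defs.
Context {d : measure_display} {T : measurableType d} {R : realType}.
Variable P : probability T R.

Definition as_ (Q : T -> Prop) : Prop := P.-negligible [set w | ~ Q w].

Definition F_complete : Prop := forall N, P.-negligible N -> measurable N.

Definition complete_sub_sigma (H : set (set T)) : Prop :=
  [/\ sigma_algebra setT H, (forall A, H A -> measurable A)
    & (forall N, P.-negligible N -> H N)].

Definition Hmeas (H : set (set T)) (f : T -> \bar R) : Prop :=
  forall B : set (\bar R), measurable B -> H (f @^-1` B).
Definition HmeasR (H : set (set T)) (f : T -> R) : Prop :=
  forall B : set R, measurable B -> H (f @^-1` B).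

Definition addE (x y : \bar R) : \bar R :=
  match x, y with
  | +oo, -oo => 0
  | -oo, +oo => 0
  | _, _ => x + y
  end.
(* (mathcomp's product on \bar R already satisfies 0 * (+-oo) = 0) *)

Definition L0F (X : T -> \bar R) : Prop := measurable_fun setT X.
Definition L0H (H : set (set T)) (X : T -> \bar R) : Prop := Hmeas H X.

Definition is_cess_sup (H : set (set T)) (X S : T -> \bar R) : Prop :=
  [/\ Hmeas H S, as_ (fun w => X w <= S w)
    & forall S', Hmeas H S' -> as_ (fun w => X w <= S' w) ->
                 as_ (fun w => S w <= S' w)].
Definition is_cess_inf (H : set (set T)) (X S : T -> \bar R) : Prop :=
  is_cess_sup H (fun w => - X w) (fun w => - S w).

(* Random variables are represented by functions; the domain D and the
   map I are required to be compatible with a.s. equality (they are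
   defined on equivalence classes in the paper). *)
Definition cond_indicator (H : set (set T)) (D : set (T -> \bar R))
    (I : (T -> \bar R) -> (T -> \bar R)) : Prop :=
  [/\ D (fun _ => 0),
      (forall X, D X -> L0F X),
      (forall X Y, D X -> L0F Y -> as_ (fun w => X w = Y w) -> D Y),
      (forall X Y, D X -> D Y -> as_ (fun w => X w = Y w) ->
                   as_ (fun w => I X w = I Y w)) &
      (forall X, D X -> L0H H (I X))] /\
  [/\ (forall X, D X -> forall S, is_cess_sup H X S ->
                 as_ (fun w => I X w <= S w)),
      (forall X, D X -> forall S, is_cess_inf H X S ->
                 as_ (fun w => S w <= I X w)) &
      (forall X Y, D X -> L0H H Y -> D (fun w => addE (X w) (Y w)))].

Definition indic1 (A : set T) (w : T) : \bar R := ((\1_A w : R)%:E).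

Definition H_decomposable (H : set (set T)) (D : set (T -> \bar R)) : Prop :=
  forall X Y A, D X -> D Y -> H A ->
    D (fun w => addE (X w * indic1 A w) (Y w * indic1 (~` A) w)).

Definition regular (H : set (set T)) (D : set (T -> \bar R))
    (I : (T -> \bar R) -> (T -> \bar R)) : Prop :=
  H_decomposable H D /\
  forall X Y A, D X -> D Y -> H A ->
    as_ (fun w => X w * indic1 A w = Y w * indic1 A w) ->
    as_ (fun w => I X w * indic1 A w = I Y w * indic1 A w).

Definition H_pos_homogeneous (H : set (set T)) (D : set (T -> \bar R))
    (I : (T -> \bar R) -> (T -> \bar R)) : Prop :=
  forall alpha : T -> R, HmeasR H alpha -> as_ (fun w => (0 <= alpha w)%R) ->
    forall X, D X ->
      D (fun w => (alpha w)%:E * X w) /\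
      as_ (fun w => I (fun w' => (alpha w')%:E * X w') w = (alpha w)%:E * I X w).

End Defs.

(* Main.v *)
Require Import Defs.
From HB Require Import structures.
From mathcomp Require Import all_boot all_order all_algebra.
From mathcomp Require Import all_classical all_reals all_analysis measurable_realfun.
Import Order.TTheory GRing.Theory Num.Theory.
Local Open Scope classical_set_scope.
Local Open Scope ring_scope.
Local Open Scope ereal_scope.

Lemma HmeasR_comp (d : measure_display) (T : measurableType d) (R : realType)
  (H : set (set T)) (h : T -> R) (f : R -> R) :
  HmeasR H h -> measurable_fun setT f -> HmeasR H (fun w => f (h w)).
Proof.
move=> hH mf B mB.
have := mf measurableT B mB; rewrite setTI => mfB.
exact: (hH _ mfB).
Qed.

Lemma as_all (d : measure_display) (T : measurableType d) (R : realType)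
  (P : probability T R) (Q : T -> Prop) : (forall w, Q w) -> as_ P Q.
Proof.
move=> HQ; rewrite /as_.
apply: (negligibleS _ (negligible_set0 P)) => w /= nQ; exact: nQ (HQ w).
Qed.

Lemma as_imp2 (d : measure_display) (T : measurableType d) (R : realType)
  (P : probability T R) (Q1 Q2 Q : T -> Prop) :
  as_ P Q1 -> as_ P Q2 -> (forall w, Q1 w -> Q2 w -> Q w) -> as_ P Q.
Proof.
move=> h1 h2 HQ; rewrite /as_.
apply: (negligibleS _ (negligibleU h1 h2)) => w /= nQ.
have [q1|] := pselect (Q1 w); last by left.
have [q2|] := pselect (Q2 w); last by right.
by exfalso; apply: nQ; apply: HQ.
Qed.

Lemma max0_ge0 (R : realType) (x : R) : (0 <= Num.max x 0)%R.
Proof. by rewrite le_max lexx orbT. Qed.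

Lemma addE0 (R : realType) (x : \bar R) : @addE R x 0 = x.
Proof. by case: x => [r| |] //=; rewrite adde0. Qed.
Lemma add0E (R : realType) (x : \bar R) : @addE R 0 x = x.
Proof. by case: x => [r| |] //=; rewrite add0e. Qed.

Theorem mainTheorem6 (d : measure_display) (T : measurableType d) (R : realType)
  (P : probability T R) (H : set (set T)) (D : set (T -> \bar R))
  (I : (T -> \bar R) -> (T -> \bar R)) :
  F_complete P -> complete_sub_sigma P H ->
  cond_indicator P H D I -> regular P H D I -> H_pos_homogeneous P H D I ->
  forall X : T -> \bar R, D X -> D (fun w => - X w) ->
  forall h : T -> R, HmeasR H h ->
    D (fun w => (h w)%:E * X w) /\
    as_ P (fun w => I (fun w' => (h w')%:E * X w') w =
                    (Num.max (h w) 0%R)%:E * I X w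
                    + (Num.max (- h w) 0%R)%:E * I (fun w' => - X w') w).
Proof.
move=> _ [sH _ _] _ [dec reg] hom X DX DNX h hH.
set hp := fun w => (Num.max (h w) 0)%R.
set hm := fun w => (Num.max (- h w) 0)%R.
have hpH : HmeasR H hp.
  apply: (@HmeasR_comp _ _ _ _ _ (fun x => (Num.max x 0)%R)) => //.
  exact: (measurable_maxr (f := id) (g := cst 0%R)).
have hmH : HmeasR H hm.
  apply: (@HmeasR_comp _ _ _ _ _ (fun x => (Num.max (- x) 0)%R)) => //.
  have := measurable_maxr (@oppr_measurable R setT) (measurable_cst (0%R : R)).
  by move=> HH; apply: HH.
have hp0 : as_ P (fun w => (0 <= hp w)%R).
  by apply: as_all => w; exact: max0_ge0.
have hm0 : as_ P (fun w => (0 <= hm w)%R).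
  by apply: as_all => w; exact: max0_ge0.
have [DY1 IY1] := hom hp hpH hp0 X DX.
have [DY2 IY2] := hom hm hmH hm0 _ DNX.
set A := h @^-1` `[0%R, +oo[.
have HA : H A by apply: hH; exact: measurable_itv.
have HAc : H (~` A).
  case: sH => _ HC _; rewrite -setTD; exact: HC.
have inA w : (w \in A) = (0 <= h w)%R.
  apply/idP/idP => [/set_mem|hw].
    by rewrite /A /preimage /= in_itv /= andbT.
  by apply/mem_set; rewrite /A /preimage /= in_itv /= andbT.
have E1 w : w \in A -> (h w)%:E * X w = (hp w)%:E * X w.
  by rewrite inA /hp => hw; rewrite max_l.
have E2 w : w \notin A -> (h w)%:E * X w = (hm w)%:E * - X w.
  rewrite inA /hm -ltNge => hw; rewrite max_l; last by rewrite oppr_ge0 ltW.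
  by rewrite EFinN muleNN.
have Deq : (fun w => (h w)%:E * X w) =
    (fun w => addE ((hp w)%:E * X w * indic1 A w)
                   ((hm w)%:E * - X w * indic1 (~` A) w)).
  apply: funext => w; rewrite /indic1 !indicE.
  case: (boolP (w \in A)) => wA.
    have wAc : w \notin ~` A by rewrite in_setC wA.
    by rewrite (negbTE wAc) mule1 mule0 -E1 // addE0.
  have wAc : w \in ~` A by rewrite in_setC.
  by rewrite wAc mule1 mule0 -E2 // add0E.
have DhX : D (fun w => (h w)%:E * X w).
  by rewrite Deq; apply: dec.
split => //.
have ind1 w : w \in A -> indic1 A w = 1.
  by move=> wA; rewrite /indic1 indicE wA.
have ind0 w : w \notin A -> indic1 A w = 0.
  by move=> wA; rewrite /indic1 indicE (negbTE wA).
have indc1 w : w \notin A -> indic1 (~` A) w = 1.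
  by move=> wA; rewrite /indic1 indicE in_setC wA.
have indc0 w : w \in A -> indic1 (~` A) w = 0.
  by move=> wA; rewrite /indic1 indicE in_setC wA.
have R1 := reg _ _ A DhX DY1 HA.
have R2 := reg _ _ (~` A) DhX DY2 HAc.
have {R1}R1 : as_ P (fun w => I (fun w => (h w)%:E * X w) w * indic1 A w =
                  I (fun w => (hp w)%:E * X w) w * indic1 A w).
  apply: R1; apply: as_all => w.
  case: (boolP (w \in A)) => wA; first by rewrite E1.
  by rewrite ind0 // !mule0.
have {R2}R2 : as_ P (fun w => I (fun w => (h w)%:E * X w) w * indic1 (~` A) w =
                  I (fun w => (hm w)%:E * - X w) w * indic1 (~` A) w).
  apply: R2; apply: as_all => w.
  case: (boolP (w \in A)) => wA; last by rewrite E2.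
  by rewrite indc0 // !mule0.
have A34 := @as_imp2 _ _ _ P _ _ (fun w => _ /\ _) IY1 IY2 (fun w a b => conj a b).
have A234 := @as_imp2 _ _ _ P _ _ (fun w => _ /\ _) R2 A34 (fun w a b => conj a b).
apply: (@as_imp2 _ _ _ P _ _ _ R1 A234) => w e1 [e2 [e3 e4]].
case: (boolP (w \in A)) => wA.
  move: e1; rewrite ind1 // !mule1 => ->; rewrite e3.
  have -> : (Num.max (- h w) 0)%R = 0%R by rewrite max_r // oppr_le0 -inA.
  by rewrite mul0e adde0.
move: e2; rewrite indc1 // !mule1 => ->; rewrite e4.
have -> : (Num.max (h w) 0)%R = 0%R.
  by rewrite max_r // ltW // ltNge -inA.
by rewrite mul0e add0e.
Qed.
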